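(* Let $n\ge 3$ and $S_n$ be as defined below. Then $S_n$ is cancellative and it has a group of fractions $G$ equal to the central localization $S_n\langle a_1a_2\cdots a_n\rangle^{-1}$. Moreover $G\cong F\times C$, where $F=\operatorname{gr}(a_1,\dots,a_{n-1})\subseteq G$ is a free group of rank $n-1$ and $C=\operatorname{gr}(a_1a_2\cdots a_n)\subseteq G$ is an infinite cyclic group.
   Context: For $n\ge 3$, $S_n$ denotes the monoid with generators $a_1,\dots,a_n$ and defining relations $a_1a_2\cdots a_n=a_{\sigma(1)}a_{\sigma(2)}\cdots a_{\sigma(n)}$ for all $\sigma$ in the cyclic subgroup of $\operatorname{Sym}_n$ generated by the cycle $(1,2,\dots,n)$. $\operatorname{gr}(b_1,\dots,b_m)$ denotes the subgroup generated by $b_1,\dots,b_m$, and $\langle z\rangle$ denotes the submonoid generated by $z$. *)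

(* Defs.v *)
From mathcomp Require Import all_boot.
Set Implicit Arguments. Unset Strict Implicit. Unset Printing Implicit Defensive.

(** * The monoid S_n, presented by words over the alphabet 'I_n.
    Letter i : 'I_n stands for the generator a_(i+1). *)

Definition zword (n : nat) : seq 'I_n := enum 'I_n.

(** The defining relations: a_1...a_n = a_{σ(1)}...a_{σ(n)} for σ = (1 2 ... n)^k,
    i.e. the word a_1...a_n equals each of its cyclic rotations [rot k]. *)
Inductive cong (n : nat) : seq 'I_n -> seq 'I_n -> Prop :=
| cong_rel : forall (u v : seq 'I_n) (k : nat),
    cong (u ++ rot k (zword n) ++ v) (u ++ zword n ++ v)
| cong_refl : forall u, cong u u
| cong_sym : forall u v, cong u v -> cong v u
| cong_trans : forall u v w, cong u v -> cong v w -> cong u w.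

Record Grp := {
  gcar :> Type;
  gmul : gcar -> gcar -> gcar;
  gone : gcar;
  ginv : gcar -> gcar;
  gmulA : forall x y z, gmul x (gmul y z) = gmul (gmul x y) z;
  gmul1 : forall x, gmul gone x = x;
  gmulV : forall x, gmul (ginv x) x = gone
}.

Arguments gmul {g}.
Arguments gone {g}.
Arguments ginv {g}.

Fixpoint gpow (G : Grp) (x : G) (m : nat) : G :=
  if m is m'.+1 then gmul x (gpow x m') else gone.

(** Evaluation of a signed word ((i, true) = b_i^{-1}, (i, false) = b_i). *)
Definition geval (G : Grp) (I : Type) (b : I -> G) (s : seq (I * bool)) : G :=
  foldr (fun p acc => gmul (if p.2 then ginv (b p.1) else b p.1) acc) gone s.

Fixpoint reduced (I : eqType) (s : seq (I * bool)) : bool :=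
  match s with
  | x :: ((y :: _) as t) => ~~ ((x.1 == y.1) && (x.2 != y.2)) && reduced t
  | _ => true
  end.

Definition gen_sub (G : Grp) (I : Type) (b : I -> G) (g : G) : Prop :=
  exists s : seq (I * bool), g = geval b s.

Definition free_of_rank (G : Grp) (F : G -> Prop) (r : nat) : Prop :=
  exists b : 'I_r -> G,
    (forall i, F (b i)) /\
    (forall g, F g -> gen_sub b g) /\
    (forall s : seq ('I_r * bool), reduced s -> geval b s = gone -> s = [::]).

Definition cyc_sub (G : Grp) (x : G) (g : G) : Prop :=
  exists m : nat, g = gpow x m \/ g = ginv (gpow x m).

Definition gensF (n : nat) : 'I_n.-1 -> seq 'I_n :=
  fun i => [:: widen_ord (leq_pred n) i].

(* Main.v *)
Require Import Defs.
From mathcomp Require Import all_boot.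
From Stdlib Require Import ZArith Lia.
Set Implicit Arguments. Unset Strict Implicit. Unset Printing Implicit Defensive.

Section GrpLemmas.
Variable G : Grp.
Implicit Types x y : G.
Lemma gmulVr x : gmul x (ginv x) = gone.
Proof.
have e : gmul x (ginv x) = gmul (gmul (ginv (ginv x)) (ginv x)) (gmul x (ginv x)).
  by rewrite gmulV gmul1.
rewrite e -gmulA (gmulA (ginv x) x) gmulV gmul1 gmulV //.
Qed.
Lemma gmul1r x : gmul x gone = x.
Proof. by rewrite -(gmulV x) gmulA gmulVr gmul1. Qed.
Lemma gmulKl x y : gmul (ginv x) (gmul x y) = y.
Proof. by rewrite gmulA gmulV gmul1. Qed.
Lemma gcancel_l x y y' : gmul x y = gmul x y' -> y = y'.
Proof. by move=> h; rewrite -(gmulKl x y) h gmulKl. Qed.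
Lemma gcancel_r x x' y : gmul x y = gmul x' y -> x = x'.
Proof. by move=> h; rewrite -(gmul1r x) -(gmulVr y) gmulA h -gmulA gmulVr gmul1r. Qed.
End GrpLemmas.

Lemma catI (T : Type) (s a b : seq T) : s ++ a = s ++ b -> a = b.
Proof. by elim: s => //= x s IH [] /IH. Qed.

Section Comb.
Variable n' : nat.
Local Notation n := n'.+1.
Local Notation T := 'I_n.
Local Notation z := (enum 'I_n).
Definition o0 : T := ord0.

Lemma size_z : size z = n. Proof. exact: size_enum_ord. Qed.

Lemma rotz_head (y : T) : rot y z = y :: behead (rot y z).
Proof. by rewrite /rot (drop_nth o0) ?size_z ?ltn_ord // nth_ord_enum. Qed.

Lemma rot_rotz (x : T) k : exists y : T, rot k (rot x z) = rot y z.
Proof.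
rewrite rot_rot_add; set r := rot_add _ _ _.
have : r <= n by rewrite -[X in _ <= X]size_z leq_rot_add.
rewrite leq_eqVlt; case/orP => [/eqP e | h]; last by exists (Ordinal h).
by exists o0; rewrite e rot_oversize ?size_z // rot0.
Qed.

Fixpoint zfree (w : seq T) : bool :=
  if w is a :: w' then (take n w != rot a z) && zfree w' else true.

Definition startsx (x : T) (w : seq T) := if w is y :: _ then y == x else false.

Definition L (x : T) (t : seq T * Z) : seq T * Z :=
  if take n (x :: t.1) == rot x z then (drop n (x :: t.1), (t.2 + 1)%Z)
  else (x :: t.1, t.2).

Definition Linv (x : T) (t : seq T * Z) : seq T * Z :=
  if startsx x t.1 then (behead t.1, t.2)
  else (behead (rot x z) ++ t.1, (t.2 - 1)%Z).

Lemma zfree_drop k w : zfree w -> zfree (drop k w).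
Proof.
elim: w k => [|a w IH] [|k] // h.
by apply: IH; case/andP: h.
Qed.

Lemma L_valid x t : zfree t.1 -> zfree (L x t).1.
Proof.
case: t => w k /= h; rewrite /L /=; case: ifP => /= e.
  exact: zfree_drop.
by rewrite e h.
Qed.

Lemma zfree_rest (x : T) w : zfree w -> ~~ startsx x w ->
  zfree (behead (rot x z) ++ w).
Proof.
move=> hw hs.
set r := rot x z.
have sr : size r = n by rewrite size_rot size_z.
suff : forall s, (exists2 j, 0 < j & s = drop j r) -> zfree (s ++ w).
  by apply; exists 1; rewrite // drop1.
elim => [|a s IH] // [j hj es].
have hjn : j < n.
  rewrite ltnNge; apply/negP => hh; move: es; rewrite drop_oversize //; by rewrite sr.
move: (es); rewrite (drop_nth o0) ?sr // => -[ea esd].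
rewrite cat_cons /=; apply/andP; split; last by apply: IH; exists j.+1.
apply/negP => /eqP e.
have [y ey] := rot_rotz x j.
have ed : rot j r = (a :: s) ++ take j r by rewrite /rot -es.
move: (ed); rewrite -/r ey rotz_head => -[ay _].
move: e; change (take n ((a :: s) ++ w) = rot a z -> False); rewrite take_cat ifN; last first.
  by rewrite -ltnNge; move: (congr1 size es); rewrite size_drop sr /= => ->; rewrite ltnS leq_subr.
subst y; rewrite -ey -/r ed.
have szs : size (a :: s) = n - j by rewrite es size_drop sr.
rewrite szs subKn ?(ltnW hjn) // => /catI e.
move: hs; rewrite /r rotz_head in e.
by case: j hj {hjn es ed ey szs ea esd} e => // j _; case: w {hw IH} => //= b w [->]; rewrite eqxx.
Qed.
Lemma Linv_valid x t : zfree t.1 -> zfree (Linv x t).1.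
Proof.
case: t => w k /= h; rewrite /Linv /=; case: ifP => /= e.
  by rewrite -drop1; apply: zfree_drop.
by apply: zfree_rest => //; rewrite e.
Qed.

Lemma take_rotz (x : T) w : take n (rot x z ++ w) = rot x z.
Proof. by rewrite take_size_cat // size_rot size_z. Qed.

Lemma drop_rotz (x : T) w : drop n (rot x z ++ w) = w.
Proof. by rewrite drop_size_cat // size_rot size_z. Qed.

Lemma L_Linv x t : zfree t.1 -> L x (Linv x t) = t.
Proof.
case: t => w k /= h; rewrite /Linv /=; case: ifP => /= e.
  case: w h e => //= y w /andP [h1 _] /eqP ey; subst y.
  by rewrite /L /= ifN.
unfold L; simpl fst; simpl snd.
rewrite -cat_cons -rotz_head take_rotz eqxx drop_rotz.
congr pair; lia.
Qed.

Lemma Linv_L x t : zfree t.1 -> Linv x (L x t) = t.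
Proof.
case: t => w k /= h; rewrite /L /=; case: ifP => /= e; last first.
  by rewrite /Linv /= eqxx.
set w'' := drop n' w.
have ew : x :: w = rot x z ++ w''.
  by rewrite -(eqP e) -/(take n (x :: w)) cat_take_drop.
rewrite /Linv /=; case: ifP => /= hs; last first.
  congr pair; last lia.
  by move: ew; rewrite rotz_head => -[].
exfalso.
move: ew; rewrite rotz_head => -[ew].
case: w'' hs ew => //= b r /eqP -> ew.
have [y ey] := rot_rotz x 1.
move: ey; rewrite {1}rotz_head rot1_cons => ey.
move: h; rewrite ew -cat_rcons ey rotz_head.
rewrite cat_cons /= => /andP [] /negP hh _; apply: hh; apply/eqP.
rewrite [in RHS]rotz_head take_size_cat //.
by move: (size_rot y z); rewrite size_z rotz_head => -[].
Qed.
Lemma decomp w : take n w != z -> exists p w',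
  [/\ p < n, w = take p z ++ w' & ~~ startsx (nth o0 z p) w'].
Proof.
move=> hw.
suff H : forall d q, q + d = n' -> take q w = take q z -> exists p w',
  [/\ p < n, w = take p z ++ w' & ~~ startsx (nth o0 z p) w'].
  by apply: (H n' 0); rewrite ?take0.
elim => [|d IH] q hq htq; have hqn : q < n by rewrite ltnS -hq leq_addr.
  case hs: (startsx (nth o0 z q) (drop q w)); last first.
    by exists q, (drop q w); split => //; [rewrite -htq cat_take_drop | rewrite hs].
  have e1 : take q.+1 w = take q.+1 z.
    rewrite -[q.+1]addn1 !takeD htq; congr cat.
    rewrite [drop q z](drop_nth o0) ?size_z //.
    by move: hs; case: (drop q w) => // b r /= /eqP ->; rewrite !take0.
  rewrite addn0 in hq; rewrite hq in e1.
  by move: hw; rewrite e1 take_oversize ?size_z // eqxx.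
case hs: (startsx (nth o0 z q) (drop q w)); last first.
  by exists q, (drop q w); split => //; [rewrite -htq cat_take_drop | rewrite hs].
have e1 : take q.+1 w = take q.+1 z.
  rewrite -[q.+1]addn1 !takeD htq; congr cat.
  rewrite [drop q z](drop_nth o0) ?size_z //.
  by move: hs; case: (drop q w) => // b r /= /eqP ->; rewrite !take0.
by apply: (IH q.+1) => //; rewrite addSn -addnS.
Qed.

Lemma L_eq x w k : L x (w, k) =
  if take n (x :: w) == rot x z then (drop n (x :: w), (k+1)%Z) else (x :: w, k).
Proof. by []. Qed.

Lemma neq_pref m (c : T) s w' : ~~ startsx c w' -> take m.+1 w' != c :: s.
Proof. by case: w' => //= b r hb; rewrite eqseq_cons (negbTE hb). Qed.

Lemma keyC p w' k : p < n -> ~~ startsx (nth o0 z p) w' ->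
  forall d j, j + d = n -> foldr L (take p z ++ w', k) (drop j z) =
   if p < j then (drop j z ++ (take p z ++ w'), k)
   else (drop j (take p z) ++ w', (k+1)%Z).
Proof.
move=> hp hs; set w := take p z ++ w'.
have szp : size (take p z) = p by rewrite size_takel // size_z ltnW.
have dp : drop p z = nth o0 z p :: drop p.+1 z by rewrite (drop_nth o0) ?size_z.
elim => [|d IH] j hj.
  move: hj; rewrite addn0 => ->; rewrite drop_oversize ?size_z // hp.
  by [].
have hjn : j < n by rewrite -hj -addSnnS leq_addr.
have oj : nth o0 z j = Ordinal hjn by apply: val_inj; rewrite /= nth_enum_ord.
have rj : rot (Ordinal hjn) z = drop j z ++ take j z by [].
have dj : drop j z = Ordinal hjn :: drop j.+1 z by rewrite (drop_nth o0) ?size_z // oj.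
rewrite dj [foldr _ _ _]/= IH; last by rewrite addSnnS.
rewrite -dj.
have szd : size (drop j z) = n - j by rewrite size_drop size_z.
case: (ltngtP p j) => hpj.
-
  rewrite ltnS (ltnW hpj) L_eq -[Ordinal hjn :: _]cat_cons -dj ifN //.
  rewrite rj take_cat szd ifN; last by rewrite -leqNgt leq_subr.
  rewrite subKn ?(ltnW hjn) // eqseq_cat // eqxx /=.
  rewrite /w take_cat szp ltnNge (ltnW hpj) /=.
  rewrite -{2}(subnKC (ltnW hpj)) takeD eqseq_cat ?szp ?size_takel ?ltnW //= dp.
  case e: (j - p) => [|m]; first by move: hpj; rewrite -subn_gt0 e.
  by rewrite eqxx /=; exact: neq_pref.
-
  rewrite ltnS leqNgt hpj /= L_eq.
  have dj' : drop j (take p z) = Ordinal hjn :: drop j.+1 (take p z).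
    by rewrite (drop_nth o0) ?szp // nth_take // oj.
  rewrite -[Ordinal hjn :: _]cat_cons -dj' ifN //.
  rewrite rj take_cat size_drop szp ifN; last by rewrite -leqNgt (leq_trans (leq_subr _ _)) // ltnW.
  have -> : drop j z = drop j (take p z) ++ drop p z.
    by rewrite -{1}(cat_take_drop p z) drop_cat szp hpj.
  rewrite -catA eqseq_cat // eqxx /= dp.
  case e: (n - (p - j)) => [|m]; first by move/eqP: e; rewrite subn_eq0 leqNgt (leq_ltn_trans (leq_subr j p) hp).
  by rewrite cat_cons neq_pref.
-
  subst p; rewrite ltnSn L_eq -[Ordinal hjn :: _]cat_cons -dj.
  have ht : take n (drop j z ++ w) = rot (Ordinal hjn) z.
    rewrite rj take_cat szd ifN; last by rewrite -leqNgt leq_subr.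
    by rewrite subKn ?(ltnW hjn) // /w take_size_cat.
  rewrite ht eqxx.
  rewrite drop_cat szd ifN; last by rewrite -leqNgt leq_subr.
  by rewrite subKn ?(ltnW hjn) // drop_size_cat // drop_oversize ?szp.
Qed.

Lemma key w k : zfree w -> foldr L (w, k) z = (w, (k+1)%Z).
Proof.
move=> hw.
have hz : take n w != z.
  case: w hw => [|a w] /=; first by case: (enum 'I_n) (size_z) => //.
  case/andP => h _; apply/negP => /eqP e.
  have hz0 : z = o0 :: behead z by move: (rotz_head o0); rewrite /rot drop0 take0 cats0.
  have ha : a = o0 by move: e; rewrite [in RHS]hz0 /= => -[].
  by move: h; subst a; rewrite rot0 e eqxx.
have [p [w' [hp ew hs]]] := decomp hz.
have := keyC k hp hs (d:=n) (j:=0) (add0n _).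
by rewrite drop0 /= drop0 -ew.
Qed.
Lemma cong_ctx p q (v v' : seq T) : cong v v' -> cong (p ++ v ++ q) (p ++ v' ++ q).
Proof.
elim => {v v'} [u v k | u | u v _ IH | u v w _ IH1 _ IH2].
- by have := cong_rel (p ++ u) (v ++ q) k; rewrite !catA.
- exact: cong_refl.
- exact: cong_sym.
- exact: cong_trans IH2.
Qed.

Lemma cong_rotz (y : T) : cong (rot y z) z.
Proof. by have := cong_rel (n:=n'.+1) [::] [::] y; rewrite /= !cats0. Qed.

Lemma cong_cons x (v v' : seq T) : cong v v' -> cong (x :: v) (x :: v').
Proof. by move=> h; have := cong_ctx [:: x] [::] h; rewrite !cats0. Qed.

Lemma central (v : seq T) : cong (z ++ v) (v ++ z).
Proof.
elim: v => [|a v IH]; first by rewrite cats0; apply: cong_refl.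
have [y ey] := rot_rotz a 1.
move: ey; rewrite {1}rotz_head rot1_cons => ey.
have h1 : cong (z ++ [:: a]) (a :: z).
  apply: cong_sym; apply: cong_trans (cong_cons a (cong_sym (cong_rotz y))) _.
  rewrite -ey -rcons_cons -rotz_head -!cats1.
  by have := cong_rel (n:=n'.+1) [::] [:: a] a; rewrite /zword.
apply: cong_trans (cong_cons a IH).
by have := cong_ctx [::] v h1; rewrite /= -!catA.
Qed.

Definition zpow k : seq T := flatten (nseq k z).

Definition red (u : seq T) := foldr L ([::], 0%Z) u.

Lemma red_spec u : exists w k, [/\ red u = (w, Z.of_nat k), zfree w & cong u (w ++ zpow k)].
Proof.
elim: u => [|x u [w [k [e hw hc]]]].
  by exists [::], 0; split => //; apply: cong_refl.
rewrite /red /= -/(red u) e L_eq; case: ifP => ht.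
  exists (drop n (x :: w)), k.+1; split.
  - by congr pair; lia.
  - exact: (zfree_drop n' hw).
  apply: cong_trans (cong_cons x hc) _.
  set w'' := drop n (x :: w).
  have ew : x :: w = rot x z ++ w'' by rewrite -(eqP ht) cat_take_drop.
  rewrite -cat_cons ew -catA.
  apply: cong_trans (cong_rel (n:=n'.+1) [::] _ x) _.
  have := cong_ctx [::] (zpow k) (central w'').
  by rewrite /zpow /zword /= -!catA.
exists (x :: w), k; split => //.
  by rewrite /= hw andbT; apply/negP => /eqP e'; move: ht; rewrite [take n _]/= e' eqxx.
exact: cong_cons.
Qed.
End Comb.



Section Free.
Variable I : eqType.
Local Notation lt := (I * bool)%type.
Implicit Types (l x y : lt) (s t a b c : seq lt).
Definition linv (l : lt) : lt := (l.1, ~~ l.2).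
Definition lmul (l : lt) (s : seq lt) :=
  if s is y :: s' then (if (l.1 == y.1) && (l.2 != y.2) then s' else l :: s) else [:: l].
Definition wmul (s t : seq lt) := foldr lmul t s.

Lemma reduced_tail l s : reduced (l :: s) -> reduced s.
Proof. by case: s => //= y s /andP []. Qed.

Lemma lmul_red l s : reduced s -> reduced (lmul l s).
Proof.
case: s => // y s /= h; case: ifP => e; first exact: reduced_tail h.
by rewrite /= e h.
Qed.

Lemma lmul_cons l s : reduced (l :: s) -> lmul l s = l :: s.
Proof. by case: s => //= y s /andP [h _]; rewrite (negbTE h). Qed.

Lemma linvK l : linv (linv l) = l.
Proof. by case: l => a b; rewrite /linv /= negbK. Qed.

Lemma lmulK l s : reduced s -> lmul (linv l) (lmul l s) = s.
Proof.
case: l => a b; case: s => [|[c d] s] /=.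
  by rewrite eqxx; case: b.
case: (eqVneq a c) => [<-|ne] /=; last first.
  by move=> _; rewrite eqxx /=; case: b.
case: (boolP (b != d)) => hbd /= h.
  have ed : d = ~~ b by clear h; move: hbd; case: b; case: d.
  subst d.
  case: s h => [|[e f] s] //= /andP [h1 _].
  by rewrite (negbTE h1).
by rewrite eqxx /=; move: hbd h; case: b; case: d.
Qed.

Lemma mul_red s t : reduced t -> reduced (wmul s t).
Proof. by elim: s => //= l s IH h; apply: lmul_red; apply: IH. Qed.

Lemma mul_lmul x t c : reduced t -> reduced c -> wmul (lmul x t) c = lmul x (wmul t c).
Proof.
case: t => [|y t] //= ht hc; case: ifP => // e.
have ex : x = linv y.
  clear ht; move: e; case: x => a b; case: y => c' d /= /andP [/eqP -> h].
  by congr pair; move: h; case: b; case: d.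
by rewrite ex lmulK // mul_red // (reduced_tail ht).
Qed.

Lemma mulA a b c : reduced b -> reduced c -> wmul (wmul a b) c = wmul a (wmul b c).
Proof.
move=> hb hc; elim: a => //= x a IH.
by rewrite mul_lmul ?mul_red // IH.
Qed.

Lemma mul_rcons a x t : wmul (rcons a x) t = wmul a (lmul x t).
Proof. by rewrite /wmul foldr_rcons. Qed.


Lemma muls0 s : reduced s -> wmul s [::] = s.
Proof.
elim: s => //= l s IH h; rewrite IH ?(reduced_tail h) //.
exact: lmul_cons.
Qed.

Definition winv s := wmul (rev (map linv s)) [::].

Lemma mulVs s : reduced s -> wmul (rev (map linv s)) s = [::].
Proof.
elim: s => //= l s IH h.
rewrite rev_cons mul_rcons.
have -> : lmul (linv l) (l :: s) = s.
  by rewrite /lmul /linv /= eqxx; case: l.2.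
exact: IH (reduced_tail h).
Qed.

Lemma mul_inv s : reduced s -> wmul (winv s) s = [::].
Proof. by move=> h; rewrite /winv mulA // mulVs. Qed.

Definition FR := {s : seq lt | reduced s}.
Definition fmul (a b : FR) : FR := exist _ (wmul (val a) (val b)) (mul_red _ (valP b)).
Definition fone : FR := exist _ [::] isT.
Definition finv (a : FR) : FR :=
  exist _ (winv (val a)) (mul_red (rev (map linv (val a))) (isT : reduced (I:=I) [::])).

Definition Gc := (FR * Z)%type.
Definition gmul' (a b : Gc) : Gc := (fmul a.1 b.1, (a.2 + b.2)%Z).
Definition gone' : Gc := (fone, 0%Z).
Definition ginv' (a : Gc) : Gc := (finv a.1, (- a.2)%Z).

Lemma Gc_eq (a b : Gc) : val a.1 = val b.1 -> a.2 = b.2 -> a = b.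
Proof. by case: a b => [a1 a2] [b1 b2] /= /val_inj -> ->. Qed.

Lemma gmulA' (x y w : Gc) : gmul' x (gmul' y w) = gmul' (gmul' x y) w.
Proof. apply: Gc_eq => /=; [by rewrite mulA ?(valP _) | lia]. Qed.
Lemma gmul1' (x : Gc) : gmul' gone' x = x.
Proof. by apply: Gc_eq. Qed.
Lemma gmulV' (x : Gc) : gmul' (ginv' x) x = gone'.
Proof. apply: Gc_eq => /=; [by rewrite mul_inv ?(valP _) | lia]. Qed.

Definition FG : Grp := Build_Grp gmulA' gmul1' gmulV'.
End Free.



Section Main.
Variable n' : nat.
Local Notation n := n'.+1.
Local Notation T := 'I_n.
Local Notation z := (enum 'I_n).
Local Notation I := 'I_n'.
Local Notation G := (FG 'I_n').

Definition e (i : I) : G := (exist _ [:: (i, false)] isT, 0%Z).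
Definition zg : G := (fone I, 1%Z).
Definition wid (i : I) : T := widen_ord (leqnSn n') i.
Definition gen0 (x : T) : G := if (insub (val x) : option I) is Some i then e i else gone.
Definition Xg : G := foldr (fun x g => gmul (gen0 x) g) gone (take n' z).
Definition gen (x : T) : G :=
  if (insub (val x) : option I) is Some i then e i else gmul (ginv Xg) zg.
Definition iot (u : seq T) : G := foldr (fun x g => gmul (gen x) g) gone u.

Definition shift (k : Z) (t : seq T * Z) := (t.1, (t.2 + k)%Z).
Definition Lsg (l : I * bool) t := if l.2 then Linv (wid l.1) t else L (wid l.1) t.
Definition A (s : seq (I * bool)) t := foldr Lsg t s.
Definition act (g : G) t := A (val g.1) (shift g.2 t).
Definition valid (t : seq T * Z) := zfree t.1.

Lemma L_shift x k t : L x (shift k t) = shift k (L x t).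
Proof. by case: t => w j; rewrite /L /shift /=; case: ifP => _ //=; f_equal; lia. Qed.

Lemma Linv_shift x k t : Linv x (shift k t) = shift k (Linv x t).
Proof. by case: t => w j; rewrite /Linv /shift /=; case: ifP => _ //=; f_equal; lia. Qed.

Lemma A_shift s k t : A s (shift k t) = shift k (A s t).
Proof.
elim: s => //= l s IH; rewrite IH /Lsg; case: l.2.
  exact: Linv_shift.
exact: L_shift.
Qed.

Lemma A_valid s t : valid t -> valid (A s t).
Proof.
elim: s => //= l s IH h; rewrite /Lsg; case: l.2.
  exact: Linv_valid (IH h).
exact: L_valid (IH h).
Qed.

Lemma Lsg_inv l t : valid t -> Lsg (linv l) (Lsg l t) = t.
Proof.
case: l => i [] h; rewrite /Lsg /linv /=.
  exact: L_Linv.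
exact: Linv_L.
Qed.

Lemma lcancel_inv (l y : I * bool) : (l.1 == y.1) && (l.2 != y.2) -> l = linv y.
Proof.
case: l => a b; case: y => c' d /= /andP [/eqP -> h].
by rewrite /linv; congr pair; move: h; case: b; case: d.
Qed.

Lemma A_lmul l r t : valid t -> A (lmul l r) t = Lsg l (A r t).
Proof.
case: r => [|y r] //= h; case: ifP => // ec.
by rewrite (lcancel_inv ec) Lsg_inv // A_valid.
Qed.

Lemma A_mul s r t : valid t -> A (wmul s r) t = A s (A r t).
Proof. by move=> h; elim: s => //= l s IH; rewrite A_lmul ?IH // -/(A _ _) A_valid. Qed.

Lemma act_mul (g h : G) t : valid t -> act (gmul g h) t = act g (act h t).
Proof.
move=> v; rewrite /act /= A_mul; last by [].
rewrite -A_shift; congr (A _ (A _ _)).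
by rewrite /shift /=; f_equal; lia.
Qed.

Lemma act_one t : act gone t = t.
Proof. by case: t => w j; rewrite /act /shift /=; f_equal; lia. Qed.

Lemma valid_act g t : valid t -> valid (act g t).
Proof. by move=> h; apply: A_valid. Qed.

Lemma act_inv g t : valid t -> act (ginv g) (act g t) = t.
Proof. by move=> h; rewrite -act_mul // gmulV act_one. Qed.

Lemma act_inv' g t : valid t -> act g (act (ginv g) t) = t.
Proof. by move=> h; rewrite -act_mul // gmulVr act_one. Qed.

Lemma gen_small (x : T) (i : I) : val x = val i -> gen x = e i.
Proof.
move=> exi; rewrite /gen; case: insubP => [j _ ej | hn].
  by congr e; apply: val_inj; rewrite ej.
by move: hn; rewrite exi ltn_ord.
Qed.

Lemma gen0_small (x : T) (i : I) : val x = val i -> gen0 x = e i.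
Proof.
move=> exi; rewrite /gen0; case: insubP => [j _ ej | hn].
  by congr e; apply: val_inj; rewrite ej.
by move: hn; rewrite exi ltn_ord.
Qed.

Lemma gen_big (x : T) : ~~ (x < n') -> gen x = gmul (ginv Xg) zg.
Proof. by move=> hx; rewrite /gen; case: insubP => [j hj _ | //]; move: hx; rewrite hj. Qed.

Lemma iot_cat u v : iot (u ++ v) = gmul (iot u) (iot v).
Proof.
elim: u => [|x u IH]; first exact: esym (gmul1 _).
rewrite cat_cons; change (gmul (gen x) (iot (u ++ v)) = gmul (gmul (gen x) (iot u)) (iot v)).
by rewrite IH gmulA.
Qed.

Lemma iot_small u : all (fun x : T => x < n') u ->
  iot u = foldr (fun x g => gmul (gen0 x) g) gone u.
Proof.
elim: u => //= x u IH /andP [hx hu]; rewrite IH //.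
by rewrite (gen_small (i := Ordinal hx)) // (gen0_small (i := Ordinal hx)).
Qed.

Lemma all_small : all (fun x : T => x < n') (take n' z).
Proof.
apply/(all_nthP (ord0 : T)) => i; rewrite size_takel ?size_enum_ord // => hi.
by rewrite nth_take // nth_enum_ord // (leq_trans hi).
Qed.

Lemma iot_take : iot (take n' z) = Xg.
Proof. exact: iot_small all_small. Qed.

Lemma z_split : z = take n' z ++ [:: ord_max].
Proof.
rewrite -{1}(cat_take_drop n' z); congr cat.
rewrite (drop_nth (ord0 : T)) ?size_enum_ord // drop_oversize ?size_enum_ord //.
by congr cons; apply: val_inj; rewrite /= nth_enum_ord.
Qed.

Lemma iot_z : iot z = zg.
Proof.
rewrite z_split iot_cat iot_take.
change (gmul Xg (gmul (gen ord_max) gone) = zg).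
by rewrite gen_big ?ltnn // gmul1r gmulA gmulVr gmul1.
Qed.

Lemma central_c (c g : G) : val c.1 = [::] -> gmul c g = gmul g c.
Proof.
move=> hc; apply: Gc_eq => /=; last lia.
by rewrite hc /= muls0 // (valP g.1).
Qed.

Lemma iot_rot k : iot (rot k z) = zg.
Proof.
case: (leqP n k) => h; first by rewrite rot_oversize ?size_enum_ord // iot_z.
have ez := iot_z; rewrite -(cat_take_drop k z) iot_cat in ez.
rewrite /rot iot_cat.
set a := iot (take k z) in ez *; set b := iot (drop k z) in ez *.
have eb : b = gmul (ginv a) zg by rewrite -ez gmulKl.
rewrite eb -gmulA (central_c (c:=zg) a erefl) gmulA gmulV gmul1 //.
Qed.

Lemma cong_iota u v : cong u v -> iot u = iot v.
Proof.
elim => {u v} [u v k | u | u v _ IH | u v w _ IH1 _ IH2] //.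
- by rewrite /zword iot_cat [iot (rot _ _ ++ _)]iot_cat iot_rot !iot_cat iot_z.
- by rewrite IH1 IH2.
Qed.

Lemma act_gen_small (x : T) t : x < n' -> act (gen x) t = L x t.
Proof.
move=> hx; rewrite (gen_small (i := Ordinal hx)) //.
rewrite /act /= /Lsg /=.
have -> : wid (Ordinal hx) = x by apply: val_inj.
by case: t => w j; rewrite /shift /=; do 2 f_equal; lia.
Qed.

Lemma act_iota_small u t : all (fun x : T => x < n') u -> valid t ->
  act (iot u) t = foldr (@L n') t u.
Proof.
move=> hu v; elim: u hu => [|x u IH] /=; first by rewrite act_one.
case/andP => hx hu; rewrite act_mul // act_gen_small // IH //.
Qed.

Lemma act_gen (x : T) t : valid t -> act (gen x) t = L x t.
Proof.
move=> v; case: (ltnP x n') => hx; first exact: act_gen_small.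
have xm : x = ord_max by apply: val_inj => /=; apply/eqP; rewrite eqn_leq hx -ltnS ltn_ord.
rewrite gen_big -?leqNgt // act_mul //.
have -> : act zg t = shift 1 t by case: t {v} => w j; rewrite /act /= /shift /=.
set y := L x t.
have vy : valid y by apply: L_valid.
have hy : act Xg y = shift 1 t.
  rewrite -iot_take act_iota_small ?all_small //.
  rewrite /y -(foldr_cat (@L n') t (take n' z) [:: x]) xm -z_split.
  by case: t v {y vy} => w j v; rewrite key.
by rewrite -hy act_inv.
Qed.

Lemma act_iota u t : valid t -> act (iot u) t = foldr (@L n') t u.
Proof.
move=> v; elim: u => [|x u IH] /=; first by rewrite act_one.
by rewrite act_mul // act_gen ?valid_act // IH.
Qed.

Lemma iot_inj u v : iot u = iot v -> cong u v.
Proof.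
move=> h.
have := congr1 (fun g => act g ([::], 0%Z)) h; rewrite /= !act_iota //.
rewrite -/(red u) -/(red v).
have [w [k [e1 _ c1]]] := red_spec u.
have [w' [k' [e2 _ c2]]] := red_spec v.
rewrite e1 e2 => -[ew ek]; subst w'.
have ekk : k = k' by lia.
subst k'; exact: cong_trans c1 (cong_sym c2).
Qed.

Lemma gpow_zg m : gpow zg m = (fone I, Z.of_nat m).
Proof.
elim: m => [|m IH] //.
change (gmul zg (gpow zg m) = (fone I, Z.of_nat m.+1)).
rewrite IH; apply: Gc_eq; first by [].
change ((1 + Z.of_nat m)%Z = Z.of_nat m.+1); lia.
Qed.

Lemma iot_zpow k : iot (zpow n' k) = gpow zg k.
Proof.
elim: k => [|k IH] //.
rewrite /zpow /= -/(zpow n' k) iot_cat IH iot_z //.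
Qed.

Lemma b_e (i : I) : iot (gensF (n:=n'.+1) i) = e i.
Proof.
rewrite /gensF; change (gmul (gen (widen_ord (leq_pred n) i)) gone = e i).
by rewrite gmul1r (gen_small (i := i)).
Qed.

Lemma geval_red s (h : reduced s) :
  geval (fun i => iot (gensF (n:=n'.+1) i)) s = ((exist _ s h, 0%Z) : G).
Proof.
elim: s h => [|l s IH] h; first by apply: Gc_eq.
change (gmul (if l.2 then ginv (iot (gensF (n:=n'.+1) l.1)) else iot (gensF (n:=n'.+1) l.1))
  (geval (fun i => iot (gensF (n:=n'.+1) i)) s) = ((exist _ (l :: s) h, 0%Z) : G)).
rewrite (IH (reduced_tail h)) b_e.
apply: Gc_eq => /=; last by case: l.2.
case: l h => i [] h /=; by rewrite lmul_cons.
Qed.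

Lemma geval_Z s : (geval (fun i => iot (gensF (n:=n'.+1) i)) s).2 = 0%Z.
Proof.
elim: s => [|l s IH] //.
change ((gmul (if l.2 then ginv (iot (gensF (n:=n'.+1) l.1)) else iot (gensF (n:=n'.+1) l.1))
  (geval (fun i => iot (gensF (n:=n'.+1) i)) s)).2 = 0%Z).
rewrite b_e; case: l.2; rewrite /= IH //.
Qed.

Lemma rest_inv (i : I) : ginv (e i) = gmul (iot (behead (rot (wid i) z))) (ginv zg).
Proof.
have h := iot_rot (wid i); rewrite rotz_head in h.
change (gmul (gen (wid i)) (iot (behead (rot (wid i) z))) = zg) in h.
rewrite (gen_small (i := i)) // in h.
have -> : iot (behead (rot (wid i) z)) = gmul (ginv (e i)) zg by rewrite -h gmulKl.
by rewrite -gmulA gmulVr gmul1r.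
Qed.

Lemma all_g (g : G) : exists u m, g = gmul (iot u) (ginv (gpow (iot z) m)).
Proof.
rewrite iot_z; case: g => [[s hs] k].
elim: s hs k => [|l s IH] hs k.
  case: (Z.le_gt_cases 0 k) => hk.
    exists (zpow n' (Z.to_nat k)), 0; rewrite iot_zpow !gpow_zg.
    by apply: Gc_eq => //=; lia.
  exists [::], (Z.to_nat (- k)); rewrite gpow_zg.
  by apply: Gc_eq => //=; lia.
have hs' := reduced_tail hs.
have [u [m em]] := IH hs' k.
have -> : ((exist _ (l :: s) hs, k) : G) =
   gmul ((exist _ [:: l] isT, 0%Z) : G) ((exist _ s hs', k) : G).
  by apply: Gc_eq => //=; rewrite lmul_cons.
rewrite em; case: l {hs} => i [].
  have -> : ((exist _ [:: (i, true)] isT, 0%Z) : G) = ginv (e i) by apply: Gc_eq.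
  exists (behead (rot (wid i) z) ++ u), m.+1.
  rewrite rest_inv iot_cat -!gmulA; congr gmul.
  rewrite gmulA (central_c (c := ginv zg) (iot u) erefl) -!gmulA; congr gmul.
  rewrite !gpow_zg; apply: Gc_eq; first by []. cbn [fst snd gmul ginv gone FG gmul' ginv' gone' zg]; lia.
exists (wid i :: u), m.
change (gmul (e i) (gmul (iot u) (ginv (gpow zg m))) =
  gmul (gmul (gen (wid i)) (iot u)) (ginv (gpow zg m))).
by rewrite (gen_small (i := i)) // gmulA.
Qed.

End Main.

Unset Implicit Arguments.

Theorem theorem2p2 (n : nat) (hn : 3 <= n) :
  (* S_n is cancellative *)
  (forall u v w : seq 'I_n, cong (u ++ v) (u ++ w) -> cong v w) /\
  (forall u v w : seq 'I_n, cong (v ++ u) (w ++ u) -> cong v w) /\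
  (* z = a_1 ... a_n is central in S_n *)
  (forall u : seq 'I_n, cong (zword n ++ u) (u ++ zword n)) /\
  (* group of fractions G = S_n <z>^{-1} *)
  exists (G : Grp) (iota : seq 'I_n -> G),
    iota [::] = gone /\
    (forall u v, iota (u ++ v) = gmul (iota u) (iota v)) /\
    (forall u v, iota u = iota v <-> cong u v) /\
    (forall g : G, exists (u : seq 'I_n) (m : nat),
        g = gmul (iota u) (ginv (gpow (iota (zword n)) m))) /\
    (* F = gr(a_1,...,a_(n-1)) is free of rank n-1 *)
    free_of_rank (gen_sub (fun i => iota (gensF i))) n.-1 /\
    (* C = gr(z) is infinite cyclic *)
    (forall m : nat, 0 < m -> gpow (iota (zword n)) m <> gone) /\
    (* G = F x C (internal direct product) *)
    (forall f c : G, gen_sub (fun i => iota (gensF i)) f ->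
        cyc_sub (iota (zword n)) c -> gmul f c = gmul c f) /\
    (forall g : G, gen_sub (fun i => iota (gensF i)) g ->
        cyc_sub (iota (zword n)) g -> g = gone) /\
    (forall g : G, exists f c : G, gen_sub (fun i => iota (gensF i)) f /\
        cyc_sub (iota (zword n)) c /\ g = gmul f c).
Proof.
case: n hn => [//|n'] _.
split.
  move=> u v w /cong_iota; rewrite !iot_cat => /gcancel_l; exact: iot_inj.
split.
  move=> u v w /cong_iota; rewrite !iot_cat => /gcancel_r; exact: iot_inj.
split.
  move=> u; apply: iot_inj; rewrite !iot_cat /zword iot_z.
  by apply: central_c.
exists (FG 'I_n'), (@iot n').
split; first by [].
split; first exact: iot_cat.
split; first by move=> u v; split; [exact: iot_inj | exact: cong_iota].
split; first exact: all_g.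
split.
  exists (fun i => iot (gensF (n:=n'.+1) i)); split; last split.
  - move=> i; exists [:: (i, false)]; exact: esym (gmul1r _).
  - by [].
  - move=> s hs; rewrite (geval_red hs) => /(congr1 (fun g => val g.1)) //.
split.
  move=> m hm; rewrite /zword iot_z gpow_zg => /(congr1 snd); cbn [snd gone FG gone']; case: m hm => // m _; lia.
split.
  move=> f c _ [m [->|->]]; rewrite /zword iot_z gpow_zg; apply: esym.
    by apply: central_c.
  by apply: central_c.
split.
  move=> g [s ->] [m hm]; have h1 := geval_Z s.
  move: hm h1; rewrite /zword iot_z gpow_zg => -[] ->.
    by move=> /= h; have -> : m = 0 by lia.
  move=> /= h; have -> : m = 0 by lia.
  by apply: Gc_eq.
move=> [[s hs] k].
exists ((exist _ s hs, 0%Z) : FG 'I_n'), ((fone _, k) : FG 'I_n'); split; last split.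
- by exists s; rewrite geval_red.
- case: (Z.le_gt_cases 0 k) => hk.
    exists (Z.to_nat k); left; rewrite /zword iot_z gpow_zg; apply: Gc_eq => //=; lia.
  exists (Z.to_nat (- k)); right; rewrite /zword iot_z gpow_zg; apply: Gc_eq => //=; lia.
- apply: Gc_eq; last by cbn [fst snd gmul FG gmul'].
  by rewrite /= muls0.
Qed.
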